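(* Let $\mathfrak g=\mathfrak r_3$ (basis $\{e_1,e_2,e_3\}$, nonzero brackets $[e_1,e_2]=e_2+e_3$, $[e_1,e_3]=e_3$). Then the action of $\mathbb R^\times\mathrm{Aut}(\mathfrak g)$ on $\mathcal M(\mathfrak g)=\mathrm{GL}_3(\mathbb R)/\mathrm{O}(3)$ (with the natural Riemannian metric) is of cohomogeneity one, and all orbits are isometrically congruent to each other.
   Context: Identify $\mathfrak g\cong\mathbb R^3$ via the basis. $\mathcal M(\mathfrak g)$ is the set of inner products on $\mathfrak g$, with transitive $\mathrm{GL}_3(\mathbb R)$-action $g.\langle\cdot,\cdot\rangle=\langle g^{-1}\cdot,g^{-1}\cdot\rangle$, so $\mathcal M(\mathfrak g)=\mathrm{GL}_3(\mathbb R)/\mathrm{O}(3)$. The natural Riemannian metric is the $\mathrm{GL}_3(\mathbb R)$-invariant metric corresponding to $\langle X,Y\rangle=\mathrm{tr}(XY)$ on $\mathrm{sym}(3)$ (reductive complement $\mathfrak{gl}_3=\mathfrak o(3)\oplus\mathrm{sym}(3)$). $\mathbb R^\times\mathrm{Aut}(\mathfrak g)=\{c\varphi:c\ne0,\ \varphi\in\mathrm{Aut}(\mathfrak g)\}\subset\mathrm{GL}_3(\mathbb R)$ acts isometrically by restriction. An isometric action is of cohomogeneity one if its orbits of maximal dimension have codimension one. Two orbits are isometrically congruent if some isometry of the ambient space maps one onto the other. *)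

(* Defs.v *)
From HB Require Import structures.
From mathcomp Require Import all_boot all_order all_algebra.
From mathcomp Require Import all_classical all_reals all_analysis.
Set Implicit Arguments. Unset Strict Implicit. Unset Printing Implicit Defensive.
Import Order.TTheory GRing.Theory Num.Theory.
Local Open Scope ring_scope.
Local Open Scope classical_set_scope.

Section R3.
Variable R : realType.

(* Lie bracket of r_3 in the basis e1,e2,e3 (indices 0,1,2), on coordinate
   column vectors: [e1,e2] = e2 + e3, [e1,e3] = e3, [e2,e3] = 0. *)
Definition r3_bracket (x y : 'cV[R]_3) : 'cV[R]_3 :=
  let a := x 0 0 * y 1 0 - x 1 0 * y 0 0 in
  let b := x 0 0 * y 2%:R 0 - x 2%:R 0 * y 0 0 in
  \col_i (if i == 0 :> 'I_3 then 0 else if i == 1 :> 'I_3 then a else a + b).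

Definition is_aut (A : 'M[R]_3) : Prop :=
  A \in unitmx /\
  forall x y : 'cV[R]_3, A *m r3_bracket x y = r3_bracket (A *m x) (A *m y).

Definition RAut (g : 'M[R]_3) : Prop :=
  exists c : R, exists A : 'M[R]_3, c != 0 /\ is_aut A /\ g = c *: A.

(* M(g): inner products, represented by their Gram matrices P
   (<x,y> = x^T P y): symmetric positive definite matrices. *)
Definition inner_products (P : 'M[R]_3) : Prop :=
  P^T = P /\ forall x : 'cV[R]_3, x != 0 -> 0 < (x^T *m P *m x) 0 0.

(* g.<.,.> = <g^-1 ., g^-1 .> *)
Definition gl_act (g P : 'M[R]_3) : 'M[R]_3 := (invmx g)^T *m P *m invmx g.

Definition RAut_orbit (P : 'M[R]_3) : set 'M[R]_3 := [set gl_act g P | g in RAut].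

(* natural GL_3-invariant Riemannian nat_metric on M(g): at P, for symmetric
   tangent vectors V, W; at the identity it corresponds to tr(XY) on sym(3)
   via X |-> d/dt exp(tX).I = -2X. *)
Definition nat_metric (P V W : 'M[R]_3) : R :=
  \tr (invmx P *m V *m invmx P *m W) / 4%:R.

Definition smooth_fun (f : R -> R) : Prop :=
  forall (n : nat) (t : R), derivable (derive1n n f) t 1.
Definition smooth_curve (c : R -> 'M[R]_3) : Prop :=
  forall i j, smooth_fun (fun t => c t i j).
Definition velocity (c : R -> 'M[R]_3) (t : R) : 'M[R]_3 :=
  \matrix_(i, j) derive1 (fun s => c s i j) t.

Definition tangent_vectors (S : set 'M[R]_3) (P : 'M[R]_3) : set 'M[R]_3 :=
  [set V | exists c : R -> 'M[R]_3,
     smooth_curve c /\ (forall t, S (c t)) /\ c 0 = P /\ velocity c 0 = V].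

Definition dim_at (S : set 'M[R]_3) (P : 'M[R]_3) (k : nat) : Prop :=
  (exists s : seq 'M[R]_3, size s = k /\ free s /\
      forall V, V \in s -> tangent_vectors S P V) /\
  (forall s : seq 'M[R]_3, free s -> (forall V, V \in s -> tangent_vectors S P V) ->
      (size s <= k)%N).

Definition cohomogeneity_one : Prop :=
  exists P, exists m : nat, exists n : nat,
    inner_products P /\ dim_at (RAut_orbit P) P m /\ dim_at inner_products P n /\
    (forall Q k, inner_products Q -> dim_at (RAut_orbit Q) Q k -> (k <= m)%N) /\
    m.+1 = n.

Definition smooth_on_M (F : 'M[R]_3 -> 'M[R]_3) : Prop :=
  forall c, smooth_curve c -> (forall t, inner_products (c t)) ->
    smooth_curve (F \o c).

Definition M_isometry (F : 'M[R]_3 -> 'M[R]_3) : Prop :=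
  exists G : 'M[R]_3 -> 'M[R]_3,
    (forall P, inner_products P -> inner_products (F P)) /\
    (forall P, inner_products P -> inner_products (G P)) /\
    (forall P, inner_products P -> G (F P) = P) /\
    (forall P, inner_products P -> F (G P) = P) /\
    smooth_on_M F /\ smooth_on_M G /\
    (forall c, smooth_curve c -> (forall t, inner_products (c t)) -> forall t,
       nat_metric (F (c t)) (velocity (F \o c) t) (velocity (F \o c) t)
       = nat_metric (c t) (velocity c t) (velocity c t)).

Definition isom_congruent (S T : set 'M[R]_3) : Prop :=
  exists F, M_isometry F /\ F @` S = T.

End R3.

(* Main.v *)
Require Import Defs.
From HB Require Import structures.
From mathcomp Require Import all_boot all_order all_algebra.
From mathcomp Require Import all_classical all_reals all_analysis.
From mathcomp Require Import ring lra.
Set Implicit Arguments. Unset Strict Implicit. Unset Printing Implicit Defensive.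
Import Order.TTheory GRing.Theory Num.Theory.
Local Open Scope ring_scope.
Local Open Scope classical_set_scope.
Definition i0 : 'I_3 := 0.
Definition i1 : 'I_3 := 1.
Definition i2 : 'I_3 := 2%:R.
Lemma ord3P (i : 'I_3) : i = i0 \/ i = i1 \/ i = i2.
Proof. case: i => [[|[|[|m]]] Hm]; [left|right;left|right;right|by []]; by apply/val_inj. Qed.
Lemma sum3 (V : nmodType) (F : 'I_3 -> V) : \sum_(i < 3) F i = F i0 + F i1 + F i2.
Proof. rewrite !big_ord_recr big_ord0 /= add0r. congr (F _ + F _ + F _); by apply/val_inj. Qed.
Lemma ord1_0 (j : 'I_1) : j = 0.
Proof. by apply/val_inj; case: j => [[]]. Qed.

Lemma mul3g (T : pzSemiRingType) (A B : 'M[T]_3) i j :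
  (A *m B) i j = A i i0 * B i0 j + A i i1 * B i1 j + A i i2 * B i2 j.
Proof. by rewrite mxE sum3. Qed.

Section Mat.
Variable R : realType.
Implicit Types A B : 'M[R]_3.

Lemma mul3E A B i j : (A *m B) i j = A i i0 * B i0 j + A i i1 * B i1 j + A i i2 * B i2 j.
Proof. by rewrite mxE sum3. Qed.

Lemma matrix3P A B : (forall i j, A i j = B i j) -> A = B.
Proof. by move=> H; apply/matrixP. Qed.

Ltac ord3 i := let H := fresh in have [H|[H|H]] := ord3P i; subst i.

Definition lowtri A := A i0 i1 = 0 /\ A i0 i2 = 0 /\ A i1 i2 = 0.

Lemma lowtri_mul A B : lowtri A -> lowtri B ->
  lowtri (A *m B) /\ forall i, (A *m B) i i = A i i * B i i.
Proof.
move=> [a1 [a2 a3]] [b1 [b2 b3]]; split; first (split; [|split]).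
- by rewrite mul3E a1 a2 b1; ring.
- by rewrite mul3E a1 a2 b2; ring.
- by rewrite mul3E a3 b2 b3; ring.
move=> i; ord3 i; rewrite mul3E ?a1 ?a2 ?a3 ?b1 ?b2 ?b3; ring.
Qed.

Lemma lowtri_unit A : lowtri A -> A i0 i0 != 0 -> A i1 i1 != 0 -> A i2 i2 != 0 ->
  A \in unitmx.
Proof.
move=> [a1 [a2 a3]] n0 n1 n2; rewrite unitmxE det_trig; last first.
  apply/forallP => i; apply/forallP => j; apply/implyP => lij.
  have := ltn_ord j; ord3 i; ord3 j => //= _; apply/eqP; by [rewrite a1|rewrite a2|rewrite a3].
rewrite unitfE !big_ord_recr big_ord0 /= mul1r.
have -> : (widen_ord (leqnSn 2) (widen_ord (leqnSn 1) ord_max)) = i0 by apply/val_inj.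
have -> : (widen_ord (leqnSn 2) ord_max) = i1 by apply/val_inj.
have -> : (@ord_max 2) = i2 by apply/val_inj.
by rewrite !mulf_neq0.
Qed.

Lemma lowtri_inv A : A \in unitmx -> lowtri A ->
  lowtri (invmx A) /\ (forall i, A i i * invmx A i i = 1) /\ (forall i, A i i != 0).
Proof.
move=> uA [a1 [a2 a3]]; have E := mulmxV uA.
have e00 : (A *m invmx A) i0 i0 = 1 by rewrite E !mxE.
have e11 : (A *m invmx A) i1 i1 = 1 by rewrite E !mxE.
have e22 : (A *m invmx A) i2 i2 = 1 by rewrite E !mxE.
have e01 : (A *m invmx A) i0 i1 = 0 by rewrite E !mxE.
have e02 : (A *m invmx A) i0 i2 = 0 by rewrite E !mxE.
have e12 : (A *m invmx A) i1 i2 = 0 by rewrite E !mxE.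
rewrite !mul3E a1 a2 ?a3 /= ?eqxx in e00 e01 e02 e11 e12 e22.
have n0 : A i0 i0 != 0.
  apply/negP => /eqP z; have : (0:R) = 1 by rewrite -e00 z; ring.
  by move/eqP; rewrite eq_sym oner_eq0.
have h01 : invmx A i0 i1 = 0.
  by apply/eqP; rewrite -(mulIr_eq0 _ (mulIf n0)) mulrC; apply/eqP; rewrite -e01; ring.
have h02 : invmx A i0 i2 = 0.
  by apply/eqP; rewrite -(mulIr_eq0 _ (mulIf n0)) mulrC; apply/eqP; rewrite -e02; ring.
rewrite h01 in e11. rewrite h02 in e12.
have n1 : A i1 i1 != 0.
  apply/negP => /eqP z; have : (0:R) = 1 by rewrite -e11 z; ring.
  by move/eqP; rewrite eq_sym oner_eq0.
have h12 : invmx A i1 i2 = 0.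
  by apply/eqP; rewrite -(mulIr_eq0 _ (mulIf n1)) mulrC; apply/eqP; rewrite -e12; ring.
rewrite h02 h12 in e22.
have d0 : A i0 i0 * invmx A i0 i0 = 1 by rewrite -e00; ring.
have d1 : A i1 i1 * invmx A i1 i1 = 1 by rewrite -e11; ring.
have d2 : A i2 i2 * invmx A i2 i2 = 1 by rewrite -e22; ring.
have n2 : A i2 i2 != 0.
  apply/negP => /eqP z; have : (0:R) = 1 by rewrite -d2 z; ring.
  by move/eqP; rewrite eq_sym oner_eq0.
split; first by [].
by split => i; ord3 i.
Qed.
End Mat.
Section Aut.
Variable R : realType.
Implicit Types A B : 'M[R]_3.
Ltac ord3 i := let H := fresh in have [H|[H|H]] := ord3P i; subst i.

Lemma mulE3 m n (A : 'M[R]_(m,3)) (B : 'M[R]_(3,n)) i j :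
  (A *m B) i j = A i i0 * B i0 j + A i i1 * B i1 j + A i i2 * B i2 j.
Proof. by rewrite mxE sum3. Qed.

Lemma brE0 (x y : 'cV[R]_3) : r3_bracket x y i0 0 = 0.
Proof. by rewrite mxE. Qed.
Lemma brE1 (x y : 'cV[R]_3) : r3_bracket x y i1 0 = x i0 0 * y i1 0 - x i1 0 * y i0 0.
Proof. by rewrite mxE. Qed.
Lemma brE2 (x y : 'cV[R]_3) : r3_bracket x y i2 0 =
  (x i0 0 * y i1 0 - x i1 0 * y i0 0) + (x i0 0 * y i2 0 - x i2 0 * y i0 0).
Proof. by rewrite mxE. Qed.

Lemma use0 (e x y : R) : e = x - y -> x = y -> e = 0.
Proof. by move=> -> ->; rewrite subrr. Qed.

Lemma use0r (e x y : R) : e = y - x -> x = y -> e = 0.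
Proof. by move=> -> ->; rewrite subrr. Qed.

Definition ev (j : 'I_3) : 'cV[R]_3 := delta_mx j 0.
Lemma evE j k : ev j k 0 = (k == j)%:R.
Proof. by rewrite mxE andbT. Qed.

Lemma aut_shape A : is_aut A ->
  A i0 i0 = 1 /\ lowtri A /\ A i1 i1 = A i2 i2.
Proof.
move=> [uA H].
have h1 := H (ev i0) (ev i1); have h2 := H (ev i0) (ev i2).
have E1 i := congr1 (fun M : 'cV_3 => M i 0) h1.
have E2 i := congr1 (fun M : 'cV_3 => M i 0) h2.
have a := E1 i0; have b := E1 i1; have c := E1 i2.
have d := E2 i0; have e := E2 i1; have f := E2 i2.
rewrite /= !mulE3 ?brE0 ?brE1 ?brE2 !mulE3 !evE /= in a b c d e f.
have A02 : A i0 i2 = 0 by apply: (use0 _ d); ring.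
rewrite A02 in a e f c.
have A01 : A i0 i1 = 0 by apply: (use0 _ a); ring.
have e' : A i1 i2 * (1 - A i0 i0) = 0 by apply: (use0 _ e); ring.
have f' : A i2 i2 * (1 - A i0 i0) - A i0 i0 * A i1 i2 = 0 by apply: (use0 _ f); ring.
have A12 : A i1 i2 = 0.
  have [h|h] := eqVneq (A i0 i0) 1.
    by move: f'; rewrite h subrr mulr0 sub0r mul1r => /eqP; rewrite oppr_eq0 => /eqP.
  by move/eqP: e'; rewrite mulf_eq0 subr_eq0 [1 == _]eq_sym (negbTE h) orbF => /eqP.
have lt : lowtri A by [].
have [_ [_ nz]] := lowtri_inv uA lt.
have A00 : A i0 i0 = 1.
  move: f'; rewrite A12 mulr0 subr0 => /eqP; rewrite mulf_eq0 (negbTE (nz i2)) /= subr_eq0 => /eqP; by [].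
split => //; split => //.
rewrite A01 A00 in c; apply/eqP; rewrite -subr_eq0; apply/eqP.
by apply: (use0r _ c); ring.
Qed.

Lemma shape_aut A : A \in unitmx -> A i0 i0 = 1 -> lowtri A -> A i1 i1 = A i2 i2 -> is_aut A.
Proof.
move=> uA a00 [a01 [a02 a12]] d; split => // x y.
apply/matrixP => i j; rewrite (ord1_0 j); ord3 i;
 rewrite !mulE3 ?brE0 ?brE1 ?brE2 ?mulE3 ?brE0 ?brE1 ?brE2 ?a00 ?a01 ?a02 ?a12 ?d; ring.
Qed.

Lemma RAutP (g : 'M[R]_3) : RAut g <-> (g \in unitmx /\ lowtri g /\ g i1 i1 = g i2 i2).
Proof.
split.
  move=> [c [A [c0 [aA ->]]]]; have [a00 [[a01 [a02 a12]] d]] := aut_shape aA.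
  have [uA _] := aA.
  split; first by rewrite unitmxZ ?unitfE.
  by split; [rewrite /lowtri !mxE a01 a02 a12 !mulr0|rewrite !mxE d].
move=> [ug [lg d]]; have [_ [_ nz]] := lowtri_inv ug lg.
exists (g i0 i0), ((g i0 i0)^-1 *: g); split; first exact: nz.
split; last by rewrite scalerA mulfV ?nz // scale1r.
have [l1 [l2 l3]] := lg.
apply: shape_aut.
- by rewrite unitmxZ // unitfE invr_eq0.
- by rewrite mxE mulVf.
- by rewrite /lowtri !mxE l1 l2 l3 !mulr0.
- by rewrite !mxE d.
Qed.
End Aut.
Section Smooth.
Variable R : realType.
Implicit Types f g h : R -> R.
Implicit Types a b d : R.

Lemma der_add f g t : derivable f t 1 -> derivable g t 1 ->
  derivable (fun s => f s + g s) t 1 /\ derive1 (fun s => f s + g s) t = derive1 f t + derive1 g t.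
Proof.
move=> df dg; have -> : (fun s => f s + g s) = f + g by [].
by split; [apply: derivableD|rewrite !derive1E deriveD].
Qed.

Lemma der_scale f a t : derivable f t 1 ->
  derivable (fun s => a * f s) t 1 /\ derive1 (fun s => a * f s) t = a * derive1 f t.
Proof.
move=> df; split; last by rewrite derive1Ml.
have -> : (fun s => a * f s) = a \*o f by [].
have -> : a \*o f = a \*: f by apply/funext => x /=.
exact: derivableZ.
Qed.

Lemma der_mul f g t : derivable f t 1 -> derivable g t 1 ->
  derivable (fun s => f s * g s) t 1 /\ derive1 (fun s => f s * g s) t = derive1 f t * g t + f t * derive1 g t.
Proof.
move=> df dg; have -> : (fun s => f s * g s) = f * g by [].
split; [apply: derivableM => // | rewrite !derive1E deriveM //].
rewrite /GRing.scale /=; ring.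
Qed.

Lemma derive1n_add f g : smooth_fun f -> smooth_fun g -> forall n,
  derive1n n (fun s => f s + g s) = (fun s => derive1n n f s + derive1n n g s).
Proof.
move=> sf sg; elim => [|n IH]; first by rewrite !derive1n0.
rewrite !derive1nS IH; apply/funext => t.
by rewrite (der_add (sf n t) (sg n t)).2.
Qed.

Lemma smooth_add f g : smooth_fun f -> smooth_fun g -> smooth_fun (fun s => f s + g s).
Proof.
move=> sf sg n t; rewrite derive1n_add //; exact: (der_add (sf n t) (sg n t)).1.
Qed.

Lemma derive1n_scale f a : smooth_fun f -> forall n,
  derive1n n (fun s => a * f s) = (fun s => a * derive1n n f s).
Proof.
move=> sf; elim => [|n IH]; first by rewrite !derive1n0.
rewrite !derive1nS IH; apply/funext => t.
by rewrite (der_scale a (sf n t)).2.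
Qed.

Lemma smooth_scale f a : smooth_fun f -> smooth_fun (fun s => a * f s).
Proof.
move=> sf n t; rewrite derive1n_scale //; exact: (der_scale a (sf n t)).1.
Qed.

Lemma smooth_comb3 f g h a b d : smooth_fun f -> smooth_fun g -> smooth_fun h ->
  smooth_fun (fun s => a * f s + b * g s + d * h s).
Proof.
move=> sf sg sh; apply: smooth_add; last exact: smooth_scale.
by apply: smooth_add; apply: smooth_scale.
Qed.

Lemma derive1n_horner (p : {poly R}) n : derive1n n (horner p) = horner (iter n (@deriv R) p).
Proof.
elim: n => [|n IH]; first by rewrite derive1n0.
by rewrite derive1nS IH /= derivE.
Qed.

Lemma smooth_horner (p : {poly R}) : smooth_fun (horner p).
Proof. move=> n t; rewrite derive1n_horner; exact: derivable_horner. Qed.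

Lemma derive1_horner (p : {poly R}) t : derive1 (horner p) t = p^`().[t].
Proof. by rewrite -derivE. Qed.

Lemma der_comb3 f g h a b d t : derivable f t 1 -> derivable g t 1 -> derivable h t 1 ->
  derive1 (fun s => a * f s + b * g s + d * h s) t = a * derive1 f t + b * derive1 g t + d * derive1 h t.
Proof.
move=> df dg dh.
have [da ea] := der_scale a df; have [db eb] := der_scale b dg; have [dd ed] := der_scale d dh.
have [dab eab] := der_add da db.
by rewrite (der_add dab dd).2 eab ea eb ed.
Qed.
End Smooth.
Section Iso.
Variable R : realType.
Implicit Types A B M P N g : 'M[R]_3.
Ltac ord3 i := let H := fresh in have [H|[H|H]] := ord3P i; subst i.

Lemma invmx_mul A B : A \in unitmx -> B \in unitmx -> invmx (A *m B) = invmx B *m invmx A.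
Proof.
move=> uA uB; have uAB : A *m B \in unitmx by rewrite unitmx_mul uA.
have E : (A *m B) *m (invmx B *m invmx A) = 1%:M.
  by rewrite mulmxA -(mulmxA A) mulmxV // mulmx1 mulmxV.
by rewrite -[RHS](mulKmx uAB) E mulmx1.
Qed.

Lemma trinvK M : M \in unitmx -> (invmx M)^T *m M^T = 1%:M.
Proof. by move=> uM; rewrite -trmx_mul mulmxV // trmx1. Qed.
Lemma trinvK' M : M \in unitmx -> M^T *m (invmx M)^T = 1%:M.
Proof. by move=> uM; rewrite -trmx_mul mulVmx // trmx1. Qed.

Lemma gl_act_conj M g P : M \in unitmx -> g \in unitmx ->
  M^T *m gl_act g P *m M = gl_act (invmx M *m g *m M) (M^T *m P *m M).
Proof.
move=> uM ug; rewrite /gl_act.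
have uMi : invmx M \in unitmx by rewrite unitmx_inv.
rewrite invmx_mul ?unitmx_mul ?uMi // invmx_mul // invmxK !trmx_mul.
rewrite !mulmxA; congr (_ *m _); rewrite -!mulmxA; congr (_ *m _).
rewrite !mulmxA -(mulmxA _ (invmx M)^T) trinvK // mulmx1.
rewrite -!mulmxA; congr (_ *m (_ *m _)).
by rewrite !mulmxA mulmxV // mul1mx.
Qed.

Lemma RAut_conj N g : N \in unitmx -> lowtri N -> RAut g -> RAut (invmx N *m g *m N).
Proof.
move=> uN lN /RAutP [ug [lg dg]].
have [lNi [dNi _]] := lowtri_inv uN lN.
have uNi : invmx N \in unitmx by rewrite unitmx_inv.
have [l1 d1] := lowtri_mul lNi lg.
have [l2 d2] := lowtri_mul l1 lN.
apply/RAutP; split; first by rewrite !unitmx_mul uNi ug.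
split => //.
rewrite !d2 !d1 dg.
have key i x : invmx N i i * x * N i i = x.
  by rewrite mulrAC [invmx N i i * N i i]mulrC dNi mul1r.
by rewrite !key.
Qed.
End Iso.
Section Iso2.
Variable R : realType.
Implicit Types A B M P N g : 'M[R]_3.
Implicit Types c : R -> 'M[R]_3.
Ltac ord3 i := let H := fresh in have [H|[H|H]] := ord3P i; subst i.

Lemma pd_congr P M : inner_products P -> M \in unitmx -> inner_products (M^T *m P *m M).
Proof.
move=> [sP pP] uM; split; first by rewrite !trmx_mul trmxK sP mulmxA.
move=> x x0.
have -> : x^T *m (M^T *m P *m M) *m x = (M *m x)^T *m P *m (M *m x).
  by rewrite trmx_mul !mulmxA.
apply: pP; apply: contra x0 => /eqP E; apply/eqP.
by have := mulKmx uM x; rewrite E mulmx0 => <-.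
Qed.

Lemma pd_unit P : inner_products P -> P \in unitmx.
Proof.
move=> [sP pP]; rewrite unitmxE unitfE; apply/negP => /det0P [v v0 vP].
have x0 : v^T != 0 by apply: contra v0 => /eqP E; apply/eqP; rewrite -(trmxK v) E trmx0.
have := pP _ x0; rewrite trmxK vP mul0mx mxE.
by rewrite ltxx.
Qed.

Lemma orbit_image M P : M \in unitmx -> lowtri M ->
  (fun Q => M^T *m Q *m M) @` RAut_orbit P = RAut_orbit (M^T *m P *m M).
Proof.
move=> uM lM; apply/seteqP; split.
  move=> _ [_ [g Rg <-] <-].
  have [ug _] := (RAutP g).1 Rg.
  exists (invmx M *m g *m M); first exact: RAut_conj.
  by rewrite gl_act_conj.
move=> _ [g Rg <-].
have [ug _] := (RAutP g).1 Rg.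
have uMi : invmx M \in unitmx by rewrite unitmx_inv.
have [lMi _] := lowtri_inv uM lM.
have Rg' : RAut (M *m g *m invmx M).
  by have := RAut_conj uMi lMi Rg; rewrite invmxK.
have ug' : M *m g *m invmx M \in unitmx by rewrite !unitmx_mul uM ug uMi.
exists (gl_act (M *m g *m invmx M) P); first by exists (M *m g *m invmx M).
rewrite gl_act_conj //; congr gl_act.
by rewrite -!mulmxA mulKmx // mulVmx // mulmx1.
Qed.

Lemma smooth_left A c : smooth_curve c -> smooth_curve (fun t => A *m c t).
Proof.
move=> sc i j.
have -> : (fun t => (A *m c t) i j) = (fun t => A i i0 * c t i0 j + A i i1 * c t i1 j + A i i2 * c t i2 j).
  by apply/funext => t; rewrite mul3E.
exact: smooth_comb3.
Qed.

Lemma smooth_right B c : smooth_curve c -> smooth_curve (fun t => c t *m B).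
Proof.
move=> sc i j.
have -> : (fun t => (c t *m B) i j) = (fun t => B i0 j * c t i i0 + B i1 j * c t i i1 + B i2 j * c t i i2).
  by apply/funext => t; rewrite mul3E; ring.
exact: smooth_comb3.
Qed.

Lemma smooth_der c t i j : smooth_curve c -> derivable (fun s => c s i j) t 1.
Proof. by move=> sc; exact: (sc i j 0%N t). Qed.

Lemma vel_left A c t : smooth_curve c -> velocity (fun s => A *m c s) t = A *m velocity c t.
Proof.
move=> sc; apply/matrixP => i j; rewrite mxE mul3E !mxE.
have -> : (fun s => (A *m c s) i j) = (fun s => A i i0 * c s i0 j + A i i1 * c s i1 j + A i i2 * c s i2 j).
  by apply/funext => s; rewrite mul3E.
by rewrite der_comb3 //; apply: smooth_der.
Qed.

Lemma vel_right B c t : smooth_curve c -> velocity (fun s => c s *m B) t = velocity c t *m B.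
Proof.
move=> sc; apply/matrixP => i j; rewrite mxE mul3E !mxE.
have -> : (fun s => (c s *m B) i j) = (fun s => B i0 j * c s i i0 + B i1 j * c s i i1 + B i2 j * c s i i2).
  by apply/funext => s; rewrite mul3E; ring.
rewrite der_comb3; try (by apply: smooth_der); ring.
Qed.

Lemma metric_congr C V M : C \in unitmx -> M \in unitmx ->
  nat_metric (M^T *m C *m M) (M^T *m V *m M) (M^T *m V *m M) = nat_metric C V V.
Proof.
move=> uC uM; rewrite /nat_metric; congr (_ / _).
have uMt : M^T \in unitmx by rewrite unitmx_tr.
rewrite invmx_mul ?unitmx_mul ?uMt ?uC // invmx_mul //.
rewrite -!mulmxA !mulKmx // !mulKVmx // mxtrace_mulC -!mulmxA.
by rewrite mulmxV // mulmx1.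
Qed.

Lemma congr_isometry M : M \in unitmx -> M_isometry (fun Q => M^T *m Q *m M).
Proof.
move=> uM; have uMi : invmx M \in unitmx by rewrite unitmx_inv.
exists (fun Q => (invmx M)^T *m Q *m invmx M).
split; first by move=> P pP; apply: pd_congr.
split; first by move=> P pP; apply: pd_congr.
split.
  by move=> P _; rewrite !mulmxA trinvK // mul1mx -mulmxA mulmxV // mulmx1.
split.
  by move=> P _; rewrite !mulmxA trinvK' // mul1mx -mulmxA mulVmx // mulmx1.
split.
  move=> c sc _; exact: (@smooth_right M _ (@smooth_left M^T _ sc)).
split.
  move=> c sc _; exact: (@smooth_right (invmx M) _ (@smooth_left (invmx M)^T _ sc)).
move=> c sc pc t.
have -> : velocity ((fun Q => M^T *m Q *m M) \o c) t = M^T *m velocity c t *m M.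
  rewrite (_ : (fun Q => M^T *m Q *m M) \o c = fun s => (M^T *m c s) *m M) //.
  by rewrite vel_right ?vel_left //; apply: smooth_left.
by rewrite metric_congr //; apply: pd_unit.
Qed.
End Iso2.
Section Chol.
Variable R : realType.
Implicit Types A B M P N g X : 'M[R]_3.
Ltac ord3 i := let H := fresh in have [H|[H|H]] := ord3P i; subst i.

Definition mk3 (a b c d e f g h k : R) : 'M[R]_3 :=
  \matrix_(i < 3, j < 3) nth 0 (nth [::] [:: [:: a; b; c]; [:: d; e; f]; [:: g; h; k]] i) j.
Definition mkv (a b c : R) : 'cV[R]_3 := \col_(i < 3) nth 0 [:: a; b; c] i.

Lemma quadE (x : 'cV[R]_3) P : (x^T *m P *m x) 0 0 =
  x i0 0 * (P i0 i0 * x i0 0 + P i0 i1 * x i1 0 + P i0 i2 * x i2 0) +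
  x i1 0 * (P i1 i0 * x i0 0 + P i1 i1 * x i1 0 + P i1 i2 * x i2 0) +
  x i2 0 * (P i2 i0 * x i0 0 + P i2 i1 * x i1 0 + P i2 i2 * x i2 0).
Proof. rewrite -mulmxA mulE3 !mulE3 !mxE; ring. Qed.

Lemma mkv_neq0 a b c : (a != 0) || (b != 0) || (c != 0) -> mkv a b c != 0.
Proof.
move=> h; apply/negP => /eqP E.
have e0 := congr1 (fun v : 'cV[R]_3 => v i0 0) E.
have e1 := congr1 (fun v : 'cV[R]_3 => v i1 0) E.
have e2 := congr1 (fun v : 'cV[R]_3 => v i2 0) E.
rewrite /= !mxE /= in e0 e1 e2.
by move: h; rewrite e0 e1 e2 eqxx.
Qed.

Lemma chol P : inner_products P -> exists X, X \in unitmx /\ lowtri X /\ P = X^T *m X.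
Proof.
move=> [sP pP].
have sy i j : P j i = P i j by rewrite -{1}sP mxE.
have q v : v != 0 -> 0 < (v^T *m P *m v) 0 0 := pP v.
set p00 := P i0 i0; set p01 := P i0 i1; set p02 := P i0 i2;
set p11 := P i1 i1; set p12 := P i1 i2; set p22 := P i2 i2.
have p22g : 0 < p22.
  have nz : mkv 0 0 1 != 0 by apply: mkv_neq0; rewrite oner_neq0 orbT.
  have := q _ nz; rewrite quadE !mxE /= => h.
  by move: h; congr (_ < _); rewrite /p22; ring.
set D := p11 * p22 - p12 ^+ 2.
have Dg : 0 < D.
  have nz : mkv 0 p22 (- p12) != 0 by apply: mkv_neq0; rewrite (gt_eqF p22g) orbT.
  have := q _ nz; rewrite quadE !mxE /= (sy i1 i2) => h.
  have : 0 < p22 * D by move: h; congr (_ < _); rewrite /D /p22 /p12 /p11; ring.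
  by rewrite pmulr_rgt0.
set x22 := Num.sqrt p22.
have x22g : 0 < x22 by rewrite sqrtr_gt0.
have x22s : x22 ^+ 2 = p22 by rewrite sqr_sqrtr // ltW.
have x22n : x22 != 0 by rewrite gt_eqF.
set x21 := p12 / x22; set x20 := p02 / x22.
have r1g : 0 < p11 - x21 ^+ 2.
  have -> : p11 - x21 ^+ 2 = D / p22 by rewrite /x21 /D -x22s; field.
  by rewrite divr_gt0.
set x11 := Num.sqrt (p11 - x21 ^+ 2).
have x11g : 0 < x11 by rewrite sqrtr_gt0.
have x11s : x11 ^+ 2 = p11 - x21 ^+ 2 by rewrite sqr_sqrtr // ltW.
have x11n : x11 != 0 by rewrite gt_eqF.
set x10 := (p01 - x21 * x20) / x11.
have e22 : p22 = x22 ^+ 2 by [].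
have e12 : p12 = x21 * x22 by rewrite /x21; field.
have e02 : p02 = x20 * x22 by rewrite /x20; field.
have e11 : p11 = x11 ^+ 2 + x21 ^+ 2 by rewrite x11s; ring.
have e01 : p01 = x10 * x11 + x20 * x21 by rewrite /x10; field.
set r := p00 - x10 ^+ 2 - x20 ^+ 2.
have rg : 0 < r.
  set u := - x10 / x11; set w := - (x20 + x21 * u) / x22.
  have nz : mkv 1 u w != 0 by apply: mkv_neq0; rewrite oner_neq0.
  have := q _ nz; rewrite quadE !mxE /= !(sy i0 i1) !(sy i0 i2) !(sy i1 i2).
  rewrite -/p00 -/p01 -/p02 -/p11 -/p12 -/p22 ?e22 ?e12 ?e02 ?e11 ?e01 => h.
  by move: h; congr (_ < _); rewrite /r /w /u; field; rewrite x22n x11n.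
set x00 := Num.sqrt r.
have x00g : 0 < x00 by rewrite sqrtr_gt0.
have x00s : x00 ^+ 2 = r by rewrite sqr_sqrtr // ltW.
exists (mk3 x00 0 0 x10 x11 0 x20 x21 x22).
have lt : lowtri (mk3 x00 0 0 x10 x11 0 x20 x21 x22) by rewrite /lowtri !mxE.
split; first by apply: lowtri_unit; rewrite // !mxE /= gt_eqF.
split => //.
apply/matrixP => i j.
ord3 i; ord3 j; rewrite mul3E !mxE /= ?(sy i0 i1) ?(sy i0 i2) ?(sy i1 i2) -/p00 -/p01 -/p02 -/p11 -/p12 -/p22;
  rewrite ?e22 ?e12 ?e02 ?e11 ?e01; try ring.
all: rewrite -[p00](subrK (x10 ^+ 2 + x20 ^+ 2)) (_ : p00 - _ = r); [rewrite -x00s; ring | rewrite /r; ring].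
Qed.
End Chol.
Section Part2.
Variable R : realType.
Lemma part2 (P Q : 'M[R]_3) : inner_products P -> inner_products Q ->
  isom_congruent (RAut_orbit P) (RAut_orbit Q).
Proof.
move=> pP pQ.
have [X [uX [lX eP]]] := chol pP.
have [Y [uY [lY eQ]]] := chol pQ.
set M := invmx X *m Y.
have uM : M \in unitmx by rewrite unitmx_mul unitmx_inv uX.
have lM : lowtri M by have [l _] := lowtri_inv uX lX; have [l2 _] := lowtri_mul l lY.
exists (fun Q0 => M^T *m Q0 *m M); split; first exact: congr_isometry.
rewrite orbit_image //; congr RAut_orbit.
rewrite eQ eP /M trmx_mul !mulmxA -(mulmxA _ _ X^T) trinvK // mulmx1.
by rewrite -(mulmxA _ X) mulmxV // mulmx1.
Qed.
End Part2.
Section Bound.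
Variable R : realType.
Implicit Types A B M P N g X V W : 'M[R]_3.
Ltac ord3 i := let H := fresh in have [H|[H|H]] := ord3P i; subst i.

Definition SW W V := V^T = V /\ \tr (W *m V) = 0.

Lemma SW_sum W m (s : m.-tuple 'M[R]_3) (k : 'I_m -> R) :
  (forall V, V \in s -> SW W V) -> SW W (\sum_(i < m) k i *: s`_i).
Proof.
move=> hs; have hi (i : 'I_m) : SW W s`_i by apply: hs; apply: mem_nth; rewrite size_tuple.
split.
  rewrite raddf_sum; apply: eq_bigr => i _.
  apply/matrixP => a b; have := (hi i).1 => /matrixP /(_ a b); rewrite !mxE => <-.
  by [].
rewrite mulmx_sumr raddf_sum big1 // => i _.
by rewrite /= -scalemxAr mxtraceZ (hi i).2 mulr0.
Qed.

Lemma free_bound_t n (idx : 'I_n -> 'I_3 * 'I_3) W m (s : m.-tuple 'M[R]_3) :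
  (forall V, SW W V -> (forall j, V (idx j).1 (idx j).2 = 0) -> V = 0) ->
  free s -> (forall V, V \in s -> SW W V) -> (m <= n)%N.
Proof.
move=> inj fs hs.
pose phi V : 'rV[R]_n := \row_(j < n) V (idx j).1 (idx j).2.
have fm : free (map_tuple phi s).
  apply/freeP => k hk.
  set V := \sum_(i < m) k i *: s`_i.
  have SV : SW W V by apply: SW_sum.
  have V0 : V = 0.
    apply: inj => // j.
    have := congr1 (fun r : 'rV[R]_n => r 0 j) hk.
    rewrite /V !summxE !mxE => h; rewrite -[X in _ = X]h; apply: eq_bigr => i _.
    by rewrite !mxE (nth_map 0) ?size_tuple // !mxE.
  move: fs => /freeP fs; exact: (fs k V0).
have := eqP fm; rewrite size_map size_tuple => <-.
by apply: leq_trans (dimvS (subvf _)) _; rewrite dimvf /dim /= mul1n.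
Qed.

Lemma free_bound n (idx : 'I_n -> 'I_3 * 'I_3) W (s : seq 'M[R]_3) :
  (forall V, SW W V -> (forall j, V (idx j).1 (idx j).2 = 0) -> V = 0) ->
  free s -> (forall V, V \in s -> SW W V) -> (size s <= n)%N.
Proof. by move=> inj fs hs; apply: (@free_bound_t n idx W _ (in_tuple s)). Qed.
End Bound.
Section Tan.
Variable R : realType.
Implicit Types A B M P N g X V W Q : 'M[R]_3.
Implicit Types c : R -> 'M[R]_3.
Ltac ord3 i := let H := fresh in have [H|[H|H]] := ord3P i; subst i.

Definition Dn A := A i1 i1 * A i2 i2 - A i1 i2 ^+ 2.

Lemma inv_phi Q g : Q^T = Q -> RAut g ->
  (gl_act g Q i2 i2) ^+ 2 * Dn Q = (Q i2 i2) ^+ 2 * Dn (gl_act g Q).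
Proof.
move=> sQ /RAutP [ug [lg dg]].
have sy i j : Q j i = Q i j by rewrite -{1}sQ mxE.
have [[m01 [m02 m12]] [dM nz]] := lowtri_inv ug lg.
have e : invmx g i2 i2 = invmx g i1 i1.
  apply: (mulfI (nz i1)); by rewrite (dM i1) dg (dM i2).
rewrite /Dn /gl_act !mul3E !mxE ?mul3E ?mxE m01 m02 m12 e (sy i1 i2) (sy i0 i1) (sy i0 i2).
ring.
Qed.

Definition WQ Q : 'M[R]_3 :=
  mk3 0 0 0 0 (- Q i2 i2 ^+ 3) 0 0 (2 * Q i2 i2 ^+ 2 * Q i1 i2) (2 * Q i2 i2 * Dn Q - Q i2 i2 ^+ 2 * Q i1 i1).

Lemma trWQ Q V : \tr (WQ Q *m V) =
  (- Q i2 i2 ^+ 3) * V i1 i1 + (2 * Q i2 i2 ^+ 2 * Q i1 i2) * V i1 i2 +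
  (2 * Q i2 i2 * Dn Q - Q i2 i2 ^+ 2 * Q i1 i1) * V i2 i2.
Proof. rewrite /mxtrace sum3 !mul3E !mxE /=; ring. Qed.

Lemma orbit_tangent Q V : inner_products Q -> tangent_vectors (RAut_orbit Q) Q V -> SW (WQ Q) V.
Proof.
move=> [sQ pQ] [c [sc [inc [c0 <-]]]].
have csym t : (c t)^T = c t.
  have [g Rg <-] := inc t; by rewrite /gl_act !trmx_mul trmxK sQ mulmxA.
have ce t i j : c t j i = c t i j by have := csym t => /matrixP /(_ i j); rewrite mxE.
split.
  apply/matrixP => i j; rewrite !mxE; congr derive1; apply/funext => s; exact: ce.
pose f s := Dn Q * (c s i2 i2 * c s i2 i2) + (- Q i2 i2 ^+ 2) * (c s i1 i1 * c s i2 i2)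
   + Q i2 i2 ^+ 2 * (c s i1 i2 * c s i1 i2).
have f0 : f = fun _ => 0.
  apply/funext => s; have [g Rg E] := inc s.
  have := inv_phi sQ Rg; rewrite E /f /Dn => h.
  by apply: (use0 _ h); ring.
have d t i j : derivable (fun s => c s i j) t 1 := @smooth_der R c t i j sc.
have df : derive1 f 0 = 0 by rewrite f0 derive1_cst.
rewrite /f der_comb3 in df; try exact: (der_mul (d _ _ _) (d _ _ _)).1.
rewrite !(der_mul (d _ _ _) (d _ _ _)).2 c0 in df.
rewrite trWQ !mxE.
by apply: (use0 _ df); rewrite /Dn; ring.
Qed.

Lemma pd_tangent V : tangent_vectors (@inner_products R) 1%:M V -> SW 0 V.
Proof.
move=> [c [sc [inc [c0 <-]]]].
have ce t i j : c t j i = c t i j by have := (inc t).1 => /matrixP /(_ i j); rewrite mxE.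
split; last by rewrite mul0mx mxtrace0.
apply/matrixP => i j; rewrite !mxE; congr derive1; apply/funext => s; exact: ce.
Qed.
End Tan.
Section Bounds2.
Variable R : realType.
Implicit Types A B M P N g X V W Q : 'M[R]_3.
Ltac ord3 i := let H := fresh in have [H|[H|H]] := ord3P i; subst i.

Lemma pd_22 Q : inner_products Q -> 0 < Q i2 i2.
Proof.
move=> [sQ pQ].
have nz : (mkv 0 0 1 : 'cV[R]_3) != 0 by apply: mkv_neq0; rewrite oner_neq0 orbT.
have := pQ _ nz; rewrite quadE !mxE /= => h.
by move: h; congr (_ < _); ring.
Qed.

Definition idx5 (j : 'I_5) : 'I_3 * 'I_3 :=
  nth (i0, i0) [:: (i0, i0); (i0, i1); (i0, i2); (i1, i2); (i2, i2)] j.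
Definition idx6 (j : 'I_6) : 'I_3 * 'I_3 :=
  nth (i0, i0) [:: (i0, i0); (i0, i1); (i0, i2); (i1, i1); (i1, i2); (i2, i2)] j.

Lemma sym_entries V : V^T = V -> forall i j, V j i = V i j.
Proof. by move=> sV i j; rewrite -{1}sV mxE. Qed.

Lemma orbit_bound Q (s : seq 'M[R]_3) : inner_products Q -> free s ->
  (forall V, V \in s -> tangent_vectors (RAut_orbit Q) Q V) -> (size s <= 5)%N.
Proof.
move=> pQ fs hs; apply: (@free_bound R 5 idx5 (WQ Q)) => //; last first.
  by move=> V /hs; apply: orbit_tangent.
move=> V [sV tV] h.
have h0 := h (@Ordinal 5 0 isT); have h1 := h (@Ordinal 5 1 isT);
have h2 := h (@Ordinal 5 2 isT); have h3 := h (@Ordinal 5 3 isT);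
have h4 := h (@Ordinal 5 4 isT); rewrite /idx5 /= in h0 h1 h2 h3 h4.
have sy := sym_entries sV.
have q22 := pd_22 pQ.
rewrite trWQ h3 h4 !mulr0 !addr0 in tV.
have h5 : V i1 i1 = 0.
  move/eqP: tV; rewrite mulf_eq0 oppr_eq0 expf_eq0 /= (gt_eqF q22) /= => /eqP; by [].
apply/matrixP => i j; rewrite mxE; ord3 i; ord3 j => //; by rewrite sy.
Qed.

Lemma pd_bound (s : seq 'M[R]_3) : free s ->
  (forall V, V \in s -> tangent_vectors (@inner_products R) 1%:M V) -> (size s <= 6)%N.
Proof.
move=> fs hs; apply: (@free_bound R 6 idx6 0) => //; last first.
  by move=> V /hs; apply: pd_tangent.
move=> V [sV tV] h.
have h0 := h (@Ordinal 6 0 isT); have h1 := h (@Ordinal 6 1 isT);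
have h2 := h (@Ordinal 6 2 isT); have h3 := h (@Ordinal 6 3 isT);
have h4 := h (@Ordinal 6 4 isT); have h5 := h (@Ordinal 6 5 isT);
rewrite /idx6 /= in h0 h1 h2 h3 h4 h5.
have sy := sym_entries sV.
apply/matrixP => i j; rewrite mxE; ord3 i; ord3 j => //; by rewrite sy.
Qed.
End Bounds2.
Section Curves.
Variable R : realType.
Implicit Types A B M P N g X V W Q : 'M[R]_3.
Ltac ord3 i := let H := fresh in have [H|[H|H]] := ord3P i; subst i.

Definition pm (a b c d e f g h k : {poly R}) : 'M[{poly R}]_3 :=
  \matrix_(i < 3, j < 3) nth 0 (nth [::] [:: [:: a; b; c]; [:: d; e; f]; [:: g; h; k]] i) j.
Definition lam : {poly R} := 1 + 'X + 'X^2.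
Lemma lam_nz t : lam.[t] != 0.
Proof. rewrite /lam !hornerE; apply/negP => /eqP h; nra. Qed.
Lemma lam0 : lam.[0] = 1.
Proof. by rewrite /lam !hornerE; ring. Qed.
Lemma lamd0 : lam^`().[0] = 1.
Proof. by rewrite /lam !poly.derivE !hornerE /= !addr0. Qed.

Definition evm (H : 'M[{poly R}]_3) t : 'M[R]_3 := \matrix_(i, j) (H i j).[t].
Definition curve (H : 'M[{poly R}]_3) t : 'M[R]_3 := (evm H t)^T *m evm H t.
Definition velm (H : 'M[{poly R}]_3) : 'M[R]_3 := \matrix_(i, j) ((H j i)^`().[0] + (H i j)^`().[0]).

Lemma pd_one : @inner_products R 1%:M.
Proof.
split; first exact: trmx1.
move=> x x0; rewrite quadE !mxE /=.
have nz : (x i0 0 != 0) || (x i1 0 != 0) || (x i2 0 != 0).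
  apply: contraNT x0; rewrite !negb_or !negbK => /andP[/andP[/eqP a /eqP b] /eqP c].
  apply/eqP/matrixP => i j; rewrite (ord1_0 j) mxE; by ord3 i.
have sq (y : R) : 0 <= y * y by rewrite -expr2 sqr_ge0.
have := sq (x i0 0); have := sq (x i1 0); have := sq (x i2 0).
have pq (y : R) : y != 0 -> 0 < y * y by move=> hy; rewrite -expr2 lt_def sqr_ge0 sqrf_eq0 hy.
move: nz => /orP [/orP [h|h]|h]; have := pq _ h; move=> h' a b c; nra.
Qed.

Section OneCurve.
Variable H : 'M[{poly R}]_3.
Hypothesis hl : [/\ H i0 i1 = 0, H i0 i2 = 0 & H i1 i2 = 0].
Hypothesis hd : forall t i, (H i i).[t] != 0.
Hypothesis h0 : forall i j, (H i j).[0] = (i == j)%:R.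

Lemma curve_entry t i j : curve H t i j = ((H^T *m H) i j).[t].
Proof. by rewrite /curve mul3E mul3g !mxE !hornerE. Qed.

Lemma curve_smooth : smooth_curve (curve H).
Proof.
move=> i j; have -> : (fun t => curve H t i j) = horner ((H^T *m H) i j).
  by apply/funext => t; rewrite curve_entry.
exact: smooth_horner.
Qed.

Lemma curve0 : curve H 0 = 1%:M.
Proof.
apply/matrixP => i j; rewrite /curve mul3E !mxE !h0.
by ord3 i; ord3 j; rewrite /= ?mulr0 ?mulr1 ?addr0 ?add0r.
Qed.

Lemma curve_vel : velocity (curve H) 0 = velm H.
Proof.
apply/matrixP => i j; rewrite !mxE.
have -> : (fun t => curve H t i j) = horner ((H^T *m H) i j).
  by apply/funext => t; rewrite curve_entry.
rewrite derive1_horner mul3g !mxE !poly.derivE !hornerE !h0.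
by ord3 i; ord3 j; rewrite /=; ring.
Qed.

Lemma evm_lowtri t : lowtri (evm H t).
Proof. by case: hl => a b c; rewrite /lowtri !mxE a b c !hornerE. Qed.

Lemma evm_unit t : evm H t \in unitmx.
Proof. by apply: lowtri_unit; [exact: evm_lowtri|rewrite mxE hd..]. Qed.

Lemma curve_pd_tangent : tangent_vectors (@inner_products R) 1%:M (velm H).
Proof.
exists (curve H); split; first exact: curve_smooth.
split; last by rewrite curve0 curve_vel.
move=> t; have := pd_congr pd_one (evm_unit t).
by rewrite mulmx1.
Qed.

Hypothesis hdd : H i1 i1 = H i2 i2.

Lemma curve_orbit_tangent : tangent_vectors (RAut_orbit 1%:M) 1%:M (velm H).
Proof.
exists (curve H); split; first exact: curve_smooth.
split; last by rewrite curve0 curve_vel.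
move=> t; exists (invmx (evm H t)); last first.
  by rewrite /gl_act invmxK mulmx1.
have uE := evm_unit t.
have [li [dI nz]] := lowtri_inv uE (evm_lowtri t).
apply/RAutP; split; first by rewrite unitmx_inv.
split => //.
have e : evm H t i1 i1 = evm H t i2 i2 by rewrite !mxE hdd.
by apply: (mulfI (nz i1)); rewrite (dI i1) e (dI i2).
Qed.
End OneCurve.
End Curves.
Section Concrete.
Variable R : realType.
Ltac ord3 i := let H := fresh in have [H|[H|H]] := ord3P i; subst i.

Definition o5 (m : nat) (h : (m < 5)%N) : 'I_5 := Ordinal h.
Lemma sum5 (F : 'I_5 -> R) : \sum_(i < 5) F i =
  F (@Ordinal 5 0 isT) + F (@Ordinal 5 1 isT) + F (@Ordinal 5 2 isT) + F (@Ordinal 5 3 isT) + F (@Ordinal 5 4 isT).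
Proof. rewrite !big_ord_recr big_ord0 /= add0r. congr (F _ + F _ + F _ + F _ + F _); by apply/val_inj. Qed.
Lemma sum6 (F : 'I_6 -> R) : \sum_(i < 6) F i =
  F (@Ordinal 6 0 isT) + F (@Ordinal 6 1 isT) + F (@Ordinal 6 2 isT) + F (@Ordinal 6 3 isT) + F (@Ordinal 6 4 isT) + F (@Ordinal 6 5 isT).
Proof. rewrite !big_ord_recr big_ord0 /= add0r. congr (F _ + F _ + F _ + F _ + F _ + F _); by apply/val_inj. Qed.

Definition Hs := @pm R (lam R) 0 0 0 (lam R) 0 0 0 (lam R).
Definition Hx := @pm R 1 0 0 0 (lam R) 0 0 0 (lam R).
Definition Ha := @pm R 1 0 0 'X 1 0 0 0 1.
Definition Hb := @pm R 1 0 0 0 1 0 'X 0 1.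
Definition Hy := @pm R 1 0 0 0 1 0 0 'X 1.
Definition H0 := @pm R (lam R) 0 0 0 1 0 0 0 1.
Definition H1 := @pm R 1 0 0 0 (lam R) 0 0 0 1.
Definition H2 := @pm R 1 0 0 0 1 0 0 0 (lam R).

Ltac hl_tac := by rewrite /Hs /Hx /Ha /Hb /Hy /H0 /H1 /H2 !mxE.
Ltac hd_tac := move=> ? [[|[|[|?]]] ?] //; rewrite /Hs /Hx /Ha /Hb /Hy /H0 /H1 /H2 !mxE /=; first [exact: lam_nz | by rewrite !hornerE oner_neq0].
Ltac h0_tac := move=> [[|[|[|?]]] ?] [[|[|[|?]]] ?] //; by rewrite /Hs /Hx /Ha /Hb /Hy /H0 /H1 /H2 !mxE /= ?lam0 ?hornerE.
Ltac htac := first [hl_tac | h0_tac | hd_tac].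

Lemma t_s : tangent_vectors (RAut_orbit 1%:M) 1%:M (velm Hs).
Proof. by apply: curve_orbit_tangent; htac. Qed.
Lemma t_x : tangent_vectors (RAut_orbit 1%:M) 1%:M (velm Hx).
Proof. by apply: curve_orbit_tangent; htac. Qed.
Lemma t_a : tangent_vectors (RAut_orbit 1%:M) 1%:M (velm Ha).
Proof. by apply: curve_orbit_tangent; htac. Qed.
Lemma t_b : tangent_vectors (RAut_orbit 1%:M) 1%:M (velm Hb).
Proof. by apply: curve_orbit_tangent; htac. Qed.
Lemma t_y : tangent_vectors (RAut_orbit 1%:M) 1%:M (velm Hy).
Proof. by apply: curve_orbit_tangent; htac. Qed.
Lemma p_0 : tangent_vectors (@inner_products R) 1%:M (velm H0).
Proof. by apply: curve_pd_tangent; htac. Qed.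
Lemma p_1 : tangent_vectors (@inner_products R) 1%:M (velm H1).
Proof. by apply: curve_pd_tangent; htac. Qed.
Lemma p_2 : tangent_vectors (@inner_products R) 1%:M (velm H2).
Proof. by apply: curve_pd_tangent; htac. Qed.
Lemma p_a : tangent_vectors (@inner_products R) 1%:M (velm Ha).
Proof. by apply: curve_pd_tangent; htac. Qed.
Lemma p_b : tangent_vectors (@inner_products R) 1%:M (velm Hb).
Proof. by apply: curve_pd_tangent; htac. Qed.
Lemma p_y : tangent_vectors (@inner_products R) 1%:M (velm Hy).
Proof. by apply: curve_pd_tangent; htac. Qed.

Lemma d1 : (1 : {poly R})^`().[0] = 0.
Proof. by rewrite derivC horner0. Qed.
Lemma d0 : (0 : {poly R})^`().[0] = 0.
Proof. by rewrite deriv0 horner0. Qed.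
Lemma dX : ('X : {poly R})^`().[0] = 1.
Proof. by rewrite derivX hornerC. Qed.
Ltac simp := rewrite /= !summxE ?sum5 ?sum6 !mxE /= /Hs /Hx /Ha /Hb /Hy /H0 /H1 /H2 ?mxE /= ?d0 ?d1 ?dX ?lamd0.

Lemma free_orbit : free [:: velm Hs; velm Hx; velm Ha; velm Hb; velm Hy].
Proof.
rewrite (_ : [:: _; _; _; _; _] = [tuple velm Hs; velm Hx; velm Ha; velm Hb; velm Hy] :> seq _) //.
apply/freeP => k hk.
have E a b := congr1 (fun M : 'M[R]_3 => M a b) hk.
have e00 := E i0 i0; have e11 := E i1 i1; have e10 := E i1 i0; have e20 := E i2 i0; have e21 := E i2 i1.
move: e00; simp => e00; move: e11; simp => e11; move: e10; simp => e10; move: e20; simp => e20; move: e21; simp => e21.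
case=> [[|[|[|[|[|?]]]]] hi] //; (have -> : hi = isT by apply: eq_irrelevance); lra.
Qed.
Lemma free_pd : free [:: velm H0; velm H1; velm H2; velm Ha; velm Hb; velm Hy].
Proof.
rewrite (_ : [:: _; _; _; _; _; _] = [tuple velm H0; velm H1; velm H2; velm Ha; velm Hb; velm Hy] :> seq _) //.
apply/freeP => k hk.
have E a b := congr1 (fun M : 'M[R]_3 => M a b) hk.
have e00 := E i0 i0; have e11 := E i1 i1; have e22 := E i2 i2; have e10 := E i1 i0; have e20 := E i2 i0; have e21 := E i2 i1.
move: e00; simp => e00; move: e11; simp => e11; move: e22; simp => e22; move: e10; simp => e10; move: e20; simp => e20; move: e21; simp => e21.
case=> [[|[|[|[|[|[|?]]]]]] hi] //; (have -> : hi = isT by apply: eq_irrelevance); lra.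
Qed.
End Concrete.

Section Final.
Variable R : realType.
Lemma part1 : cohomogeneity_one R.
Proof.
exists 1%:M, 5%N, 6%N.
split; first exact: pd_one.
split.
  split.
    exists [:: velm (Hs R); velm (Hx R); velm (Ha R); velm (Hb R); velm (Hy R)]; split => //; split; first exact: (@free_orbit R).
    move=> V; rewrite !inE => /orP[/eqP->|/orP[/eqP->|/orP[/eqP->|/orP[/eqP->|/eqP->]]]].
    - exact: (@t_s R).
    - exact: (@t_x R).
    - exact: (@t_a R).
    - exact: (@t_b R).
    - exact: (@t_y R).
  move=> s fs hs; exact: (orbit_bound (@pd_one R) fs hs).
split.
  split.
    exists [:: velm (H0 R); velm (H1 R); velm (H2 R); velm (Ha R); velm (Hb R); velm (Hy R)]; split => //; split; first exact: (@free_pd R).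
    move=> V; rewrite !inE => /orP[/eqP->|/orP[/eqP->|/orP[/eqP->|/orP[/eqP->|/orP[/eqP->|/eqP->]]]]].
    - exact: (@p_0 R).
    - exact: (@p_1 R).
    - exact: (@p_2 R).
    - exact: (@p_a R).
    - exact: (@p_b R).
    - exact: (@p_y R).
  by move=> s fs hs; apply: pd_bound fs hs.
split => //.
move=> Q k pQ [[s [<- [fs hs]]] _].
exact: orbit_bound pQ fs hs.
Qed.
End Final.

Theorem lemma5p1 (R : realType) :
  cohomogeneity_one R /\
  (forall P Q : 'M[R]_3, inner_products P -> inner_products Q ->
     isom_congruent (RAut_orbit P) (RAut_orbit Q)).
Proof. split; [exact: part1 | move=> P Q; exact: part2]. Qed.
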